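(* Let $(\rho,\sigma)\in\mathfrak V$ and $P,Q\in W^{(l)}\setminus\{0\}$ with $[Q,P]\in K^\times$. If $[Q,P]_{\rho,\sigma}=0$, then there exists $(\rho'',\sigma'')\in\overline{\mathfrak V}$ with $(\rho'',\sigma'')<(\rho,\sigma)$ such that $[Q,P]_{\rho',\sigma'}=0$ for all $(\rho',\sigma')\in\mathfrak V$ with $(\rho'',\sigma'')<(\rho',\sigma')<(\rho,\sigma)$.
   Context: $K$ is a field of characteristic zero, $l\in\mathbb{N}$. $W^{(l)}$ is the associative $K$-algebra with $K$-basis $\{X^{i/l}Y^j:i\in\mathbb{Z},j\in\mathbb{N}_0\}$, powers of $X$ multiplying as Laurent monomials and $[Y,X^\alpha]=\alpha X^{\alpha-1}$ for $\alpha\in\frac1l\mathbb{Z}$. $\Psi^{(l)}(X^{i/l}Y^j)=x^{i/l}y^j\in K[x^{\pm1/l},y]$; supports are sets of exponents with nonzero coefficient. $\overline{\mathfrak V}=\{(\rho,\sigma)\in\mathbb{Z}^2:\gcd(\rho,\sigma)=1,\rho+\sigma\ge0\}$, $\mathfrak V$ the subset with $\rho+\sigma>0$. Total order on $\overline{\mathfrak V}$: $(1,-1)<(\rho,\sigma)<(-1,1)$ for $(\rho,\sigma)\in\mathfrak V$, and on $\mathfrak V$, $(\rho_1,\sigma_1)\le(\rho,\sigma)$ iff $\rho_1\sigma-\sigma_1\rho\ge0$. For $P\ne0$, $v_{\rho,\sigma}(P)=\max\{\rho a+\sigma b:(a,b)\in\mathrm{Supp}(P)\}$, $\ell_{\rho,\sigma}(P)$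 = sum of terms of $\Psi^{(l)}(P)$ attaining it. $[Q,P]_{\rho,\sigma}:=0$ if $[Q,P]=0$ or $v_{\rho,\sigma}([Q,P])<v_{\rho,\sigma}(Q)+v_{\rho,\sigma}(P)-(\rho+\sigma)$, and $:=\ell_{\rho,\sigma}([Q,P])$ otherwise. *)

(* Defs.v *)
From HB Require Import structures.
From mathcomp Require Import all_boot all_order all_algebra.
Set Implicit Arguments. Unset Strict Implicit. Unset Printing Implicit Defensive.
Import Order.TTheory GRing.Theory Num.Theory.
Local Open Scope ring_scope.

(* Elements of W^(l) are represented as finite lists of terms (c, i, j),
   standing for the sum of c * X^(i/l) Y^j.  The element itself is the
   coefficient function coefW (the list is only a presentation). *)
Definition W (K : Type) := seq (K * int * nat).

Section Weyl.
Variable K : fieldType.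
Variable l : nat.

Definition coefW (P : W K) (ij : int * nat) : K :=
  \sum_(t <- P | (t.1.2 == ij.1) && (t.2 == ij.2)) t.1.1.

Definition isZeroW (P : W K) : bool :=
  all (fun t => coefW P (t.1.2, t.2) == 0) P.

Definition fallW (i : int) (m : nat) : K :=
  \prod_(r < m) (i%:~R / l%:R - r%:R).

(* (c X^(i1/l) Y^j) (d X^(i2/l) Y^k)
   = sum_m c d C(j,m) (i2/l)_m X^((i1+i2-m l)/l) Y^(j+k-m),
   from [Y, X^a] = a X^(a-1). *)
Definition mulTerm (t u : K * int * nat) : W K :=
  let: (c, i1, j) := t in let: (d, i2, k) := u in
  [seq (c * d * ('C(j, m))%:R * fallW i2 m, i1 + i2 - (m * l)%:Z, (j - m + k)%N)
   | m <- iota 0 j.+1].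

Definition mulW (P Q : W K) : W K :=
  flatten [seq flatten [seq mulTerm t u | u <- Q] | t <- P].

Definition oppW (P : W K) : W K := [seq (- t.1.1, t.1.2, t.2) | t <- P].

Definition commW (Q P : W K) : W K := mulW Q P ++ oppW (mulW P Q).

Definition inKunits (P : W K) : Prop :=
  exists c : K, c != 0 /\ forall ij, coefW P ij = (if ij == (0%:Z, 0%N) then c else 0).

Definition wt (rs : int * int) (ij : int * nat) : rat :=
  rs.1%:~R * (ij.1%:~R / l%:R) + rs.2%:~R * (ij.2)%:R.

Definition suppW (P : W K) : seq (int * nat) :=
  [seq (t.1.2, t.2) | t <- P & coefW P (t.1.2, t.2) != 0].

Definition vW (rs : int * int) (P : W K) : rat :=
  match suppW P with
  | [::] => 0
  | x :: s => foldr (fun y a => Num.max (wt rs y) a) (wt rs x) s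
  end.

Definition ellW (rs : int * int) (P : W K) (ij : int * nat) : K :=
  if (coefW P ij != 0) && (wt rs ij == vW rs P) then coefW P ij else 0.

Definition bracketW (rs : int * int) (Q P : W K) (ij : int * nat) : K :=
  let C := commW Q P in
  if isZeroW C || (vW rs C < vW rs Q + vW rs P - (rs.1 + rs.2)%:~R)
  then 0 else ellW rs C ij.

Definition bracket_zero (rs : int * int) (Q P : W K) : Prop :=
  forall ij, bracketW rs Q P ij = 0.

End Weyl.

Definition nonzeroW (K : fieldType) (P : W K) : Prop := exists ij, coefW P ij != 0.

Definition inVbar (rs : int * int) : bool :=
  (gcdz rs.1 rs.2 == 1) && (0 <= rs.1 + rs.2).
Definition inV (rs : int * int) : bool :=
  (gcdz rs.1 rs.2 == 1) && (0 < rs.1 + rs.2).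

Definition ltV (a b : int * int) : bool :=
  if a == (1, -1) then b != (1, -1)
  else if b == (1, -1) then false
  else if b == (-1, 1) then a != (-1, 1)
  else if a == (-1, 1) then false
  else 0 < a.1 * b.2 - a.2 * b.1.

(* Main.v *)
Require Import Defs.
From mathcomp Require Import all_boot all_order all_algebra.
From mathcomp Require Import ring lra zify.
Import Order.TTheory GRing.Theory Num.Theory.
Set Implicit Arguments. Unset Strict Implicit. Unset Printing Implicit Defensive.
Local Open Scope ring_scope.

Lemma natz_intr (n : nat) : ((n%:Z)%:~R : rat) = n%:R.
Proof. by []. Qed.

Lemma wt_lin (l : nat) (x : int * int) (i1 i2 : int) (j1 j2 : nat) : (0 < l)%N ->
  wt l x (i1, j1) + wt l x (i2, j2) - (x.1 + x.2)%:~R =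
  ((i1 + i2 - l%:Z) * x.1 + (((j1 + j2)%N)%:Z * l%:Z - l%:Z) * x.2)%:~R / l%:R.
Proof.
move=> hl; rewrite /wt /= !(intrD, intrM, intrB) !natz_intr natrD.
have hl' : (l%:R : rat) != 0 by rewrite pnatr_eq0 -lt0n.
by field.
Qed.

Section F.
Variable f : int * nat -> rat.
Lemma foldmax_ge x s y : y \in x :: s ->
  f y <= foldr (fun y a => Num.max (f y) a) (f x) s.
Proof.
elim: s => [|z s IH] /=.
  by rewrite inE => /eqP ->.
rewrite !inE le_max => /or3P [/eqP e|/eqP->|h].
- by rewrite IH ?orbT // e mem_head.
- by rewrite lexx.
- by rewrite IH ?orbT // inE h orbT.
Qed.
Lemma foldmax_in x s : exists2 y, y \in x :: s &
  f y = foldr (fun y a => Num.max (f y) a) (f x) s.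
Proof.
elim: s => [|z s [y hy IH]] /=; first by exists x; rewrite ?mem_head.
rewrite maxEle; case: ifP => _.
  by exists y => //; move: hy; rewrite !inE => /orP[->|->]; rewrite ?orbT.
by exists z; rewrite // !inE eqxx orbT.
Qed.
End F.

Lemma coef_nz_mem (K : fieldType) (P : W K) ij : coefW P ij != 0 ->
  exists2 t, t \in P & (t.1.2, t.2) = ij.
Proof.
move=> h; case: (@hasP _ (fun t : K * int * nat => (t.1.2 == ij.1) && (t.2 == ij.2)) P).
  by case=> t ht /andP[/eqP h1 /eqP h2]; exists t => //; rewrite h1 h2 -surjective_pairing.
move=> H; case/eqP: h; rewrite /coefW big1_seq // => t /andP[hp ht].
by case: H; exists t.
Qed.

Lemma mem_suppW (K : fieldType) (P : W K) ij : ij \in suppW P -> coefW P ij != 0.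
Proof. by case/mapP => t; rewrite mem_filter => /andP[h _] ->. Qed.

Lemma suppW_mem (K : fieldType) (P : W K) ij : coefW P ij != 0 -> ij \in suppW P.
Proof.
move=> h; have [t ht e] := coef_nz_mem h.
apply/mapP; exists t => //; by rewrite mem_filter e h.
Qed.

Lemma vW_attain (K : fieldType) l rs (P : W K) : nonzeroW P ->
  exists ij, (vW l rs P = wt l rs ij) /\ (forall rs', wt l rs' ij <= vW l rs' P).
Proof.
case=> ij0 /suppW_mem; rewrite /vW; case: (suppW P) => [//|x s] _.
have [y hy e] := foldmax_in (wt l rs) x s.
by exists y; split => // rs'; apply: foldmax_ge.
Qed.

Lemma wt00 l rs : wt l rs (0, 0%N) = 0.
Proof. by rewrite /wt /= mul0r !mulr0 addr0. Qed.

Lemma bracket_iff (K : fieldType) l rs (P Q : W K) :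
  inKunits (commW l Q P) ->
  bracket_zero l rs Q P <-> 0 < vW l rs Q + vW l rs P - (rs.1 + rs.2)%:~R.
Proof.
case=> c [hc hC].
set C := commW l Q P in hC *.
have c00 : coefW C (0, 0%N) = c by rewrite hC eqxx.
have hz : isZeroW C = false.
  have [t ht e] := coef_nz_mem (ij := (0, 0%N)) (P := C) (ltac:(by rewrite c00)).
  apply/negP => /allP /(_ t ht); by rewrite e c00 (negbTE hc).
have hv : vW l rs C = 0.
  rewrite /vW; case E: (suppW C) => [//|x s].
  have [y hy <-] := foldmax_in (wt l rs) x s.
  move: hy; rewrite -E => /mem_suppW; rewrite hC.
  by case: (y =P (0, 0%N)) => [-> _|_]; [rewrite wt00 | rewrite eqxx].
rewrite /bracket_zero /bracketW -/C hz hv /=.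
split.
  move=> /(_ (0, 0%N)); case: ifP => [//|_].
  by rewrite /ellW c00 hc wt00 hv eqxx /= => /eqP; rewrite (negbTE hc).
by move=> h ij; rewrite h.
Qed.

Lemma ltV_pos (a b : int * int) : 0 < a.1 + a.2 -> 0 < b.1 + b.2 ->
  ltV a b = (0 < a.1 * b.2 - a.2 * b.1).
Proof.
case: a => a1 a2; case: b => b1 b2 /= ha hb.
have F : forall u v : int, 0 < u + v -> ((u, v) == (1, -1)) = false /\ ((u, v) == (-1, 1)) = false.
  by move=> u v h; split; apply/eqP => -[e1 e2]; rewrite e1 e2 in h.
rewrite /ltV /=; have [-> ->] := F _ _ ha; have [-> ->] := F _ _ hb; by [].
Qed.

Lemma copr_lemma (k r s : int) :
  gcdz (k * (r + s) * r + 1) (k * (r + s) * s - 1) == 1.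
Proof.
apply/coprimezP; exists (1 - k * r * s, k * r * r) => /=; ring.
Qed.

Theorem corollary3p4 (K : fieldType) (l : nat) (rs : int * int) (P Q : W K) :
  [pchar K] =i pred0 -> (0 < l)%N ->
  inV rs -> nonzeroW P -> nonzeroW Q ->
  inKunits (commW l Q P) ->
  bracket_zero l rs Q P ->
  exists rs'' : int * int,
    [/\ inVbar rs'', ltV rs'' rs &
        forall rs' : int * int, inV rs' -> ltV rs'' rs' -> ltV rs' rs ->
          bracket_zero l rs' Q P].
Proof.
move=> _ hl hrs hP hQ hC hb.
have [[i1 j1] [eq1 hq]] := vW_attain l rs hQ.
have [[i2 j2] [eq2 hp]] := vW_attain l rs hP.
move/(bracket_iff rs hC): hb; rewrite eq1 eq2 wt_lin //.
set al := (i1 + i2 - l%:Z); set be := (((j1 + j2)%N)%:Z * l%:Z - l%:Z).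
have hl' : (0 : rat) < l%:R^-1 by rewrite invr_gt0 ltr0n.
rewrite pmulr_lgt0 // ltr0z => Lr.
have key : forall x : int * int, 0 < al * x.1 + be * x.2 ->
    0 < vW l x Q + vW l x P - (x.1 + x.2)%:~R.
  move=> x h; apply: (lt_le_trans (_ : 0 < wt l x (i1, j1) + wt l x (i2, j2) - (x.1 + x.2)%:~R)).
    by rewrite wt_lin // pmulr_lgt0 // ltr0z.
  by rewrite lerD2r lerD.
clear eq1 eq2; case: rs hrs Lr => r s /andP[_ hs] /= Lr; rewrite /= in hs.
set Lw := al - be.
have [k [hk1 hk2]] : exists k : int, 1 <= k /\ 0 < k + Lw.
  have [h|h] := lerP 0 Lw; [exists 1 | exists (1 - Lw)]; lia.
have hN : 0 < k * (r + s) * (r + s) by apply: mulr_gt0; [apply: mulr_gt0|]; lia.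
exists (k * (r + s) * r + 1, k * (r + s) * s - 1); split.
- rewrite /inVbar /= copr_lemma /=.
  have -> : k * (r + s) * r + 1 + (k * (r + s) * s - 1) = k * (r + s) * (r + s) by ring.
  by apply: mulr_ge0; [apply: mulr_ge0|]; lia.
  rewrite ltV_pos /=; [|lia|lia].
  have -> : (k * (r + s) * r + 1) * s - (k * (r + s) * s - 1) * r = r + s by ring.
  by [].
- case=> x1 x2 /andP[_ hx] h1 h2; apply/(bracket_iff (x1,x2) hC)/key => /=.
  rewrite /= in hx; rewrite ltV_pos /= in h1; [|lia|lia].
  rewrite ltV_pos /= in h2; [|lia|lia].
  set A := x1 + x2 in hx; set B := x1 * s - x2 * r in h2.
  have e1 : (r + s) * (al * x1 + be * x2) = A * (al * r + be * s) + B * Lw.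
    rewrite /A /B /Lw; ring.
  have hA : k * (r + s) * B + 1 <= A by rewrite /A /B; lia.
  have h3 : (k * (r + s) * B + 1) * (al * r + be * s) <= A * (al * r + be * s).
    by apply: ler_wpM2r; lia.
  have h4 : 0 <= (k * B) * ((r + s) * (al * r + be * s) - 1).
    apply: mulr_ge0; first by apply: mulr_ge0; lia.
    rewrite subr_ge0; apply: mulr_ege1; lia.
  have h5 : 0 < B * (k + Lw) by apply: mulr_gt0.
  have h6 : 0 < (r + s) * (al * x1 + be * x2) by rewrite e1; lia.
  by rewrite pmulr_rgt0 in h6.
Qed.
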